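(* Let $n>2$ be an integer. There exist two distinct $n$-multisets $A\neq B$ of complex numbers with $A^{(2)}=B^{(2)}$ if and only if $n$ is a power of $2$.
   Context: An $n$-multiset is a multiset $A=\{a_1,\dots,a_n\}$ of $n$ numbers, counted with multiplicity. For $1\le s\le n$, the multiset of $s$-sums of $A$, denoted $A^{(s)}$, is the multiset of the $\binom{n}{s}$ numbers $a_{i_1}+\dots+a_{i_s}$ over all index sets $1\le i_1<\dots<i_s\le n$. *)

(* Defs.v *)
From HB Require Import structures.
From mathcomp Require Import all_boot all_order all_algebra.
Set Implicit Arguments. Unset Strict Implicit. Unset Printing Implicit Defensive.
Import Order.TTheory GRing.Theory Num.Theory.
Local Open Scope ring_scope.

(* A multiset of numbers is represented by a sequence, up to permutation
   (multiset equality = perm_eq).  [ssums s A] is the multiset A^(s) of all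
   s-sums a_{i_1}+...+a_{i_s} over index sets i_1 < ... < i_s, listed with
   multiplicity: an s-subset of x :: A either contains x (x plus an
   (s-1)-subset of A) or is an s-subset of A. *)
Fixpoint ssums {R : nmodType} (s : nat) (A : seq R) : seq R :=
  match s, A with
  | 0%N, _ => [:: 0]
  | s'.+1, [::] => [::]
  | s'.+1, x :: A' => [seq y + x | y <- ssums s' A'] ++ ssums s A'
  end.

(* Main.v *)
Require Import Defs.
From HB Require Import structures.
From mathcomp Require Import all_boot all_order all_algebra.
From mathcomp Require Import ring zify.
Import Order.TTheory GRing.Theory Num.Theory.
Set Implicit Arguments. Unset Strict Implicit. Unset Printing Implicit Defensive.
Section PW.
Variable C : numClosedFieldType.
Local Open Scope ring_scope.

Definition pw (k : nat) (s : seq C) : C := \sum_(x <- s) x ^+ k.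

Lemma sum_count (s : seq C) (f : C -> C) c K :
  (forall x, x \in s -> f x = (x == c)%:R * K) ->
  \sum_(x <- s) f x = (count_mem c s)%:R * K.
Proof.
elim: s => [|y s IH] H; first by rewrite big_nil mul0r.
rewrite big_cons H ?mem_head // IH; last by move=> x xs; apply: H; rewrite inE xs orbT.
by rewrite /= natrD mulrDl eq_sym.
Qed.

Lemma pw_horner (s : seq C) (q : {poly C}) :
  \sum_(x <- s) q.[x] = \sum_(i < size q) q`_i * pw i s.
Proof.
under eq_bigr do rewrite horner_coef.
rewrite exchange_big /=; apply: eq_bigr => i _.
by rewrite /pw mulr_sumr.
Qed.

Lemma pw_perm (s t : seq C) : (forall k, pw k s = pw k t) -> perm_eq s t.
Proof.
move=> H; apply/allP => c _ /=.
set r := undup (s ++ t).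
set q := \prod_(d <- r | d != c) ('X - d%:P).
set K := \prod_(d <- r | d != c) (c - d).
have qval : forall x, x \in s ++ t -> q.[x] = (x == c)%:R * K.
  move=> x xst; rewrite /q horner_prod.
  have [->|xc] := eqVneq x c; first by rewrite mul1r; apply: eq_bigr => d _; rewrite hornerXsubC.
  rewrite mul0r; apply/eqP; rewrite prodf_seq_eq0; apply/hasP; exists x.
    by rewrite mem_undup.
  by rewrite xc hornerXsubC subrr eqxx.
have K0 : K != 0.
  rewrite /K prodf_seq_eq0; apply/hasPn => d _; apply/negP => /andP [dc].
  by rewrite subr_eq0 eq_sym (negbTE dc).
have e1 : \sum_(x <- s) q.[x] = (count_mem c s)%:R * K.
  by apply: sum_count => x xs; apply: qval; rewrite mem_cat xs.
have e2 : \sum_(x <- t) q.[x] = (count_mem c t)%:R * K.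
  by apply: sum_count => x xs; apply: qval; rewrite mem_cat xs orbT.
have : (count_mem c s)%:R * K = (count_mem c t)%:R * K :> C.
  by rewrite -e1 -e2 !pw_horner; apply: eq_bigr => i _; rewrite H.
by move/(mulIf K0)/eqP; rewrite eqr_nat.
Qed.

Lemma ssums1 (L : seq C) : ssums 1 L = L.
Proof. elim: L => //= x L IH; rewrite IH; have -> : ssums 0 L = [:: 0] by case: L {IH}. by rewrite /= add0r. Qed.

Lemma ss2_cons x (L : seq C) : ssums 2 (x :: L) = [seq y + x | y <- L] ++ ssums 2 L.
Proof. by rewrite /= ssums1. Qed.

Lemma pw_shift k (X : seq C) e :
  pw k [seq x + e | x <- X] = \sum_(i < k.+1) (pw (k - i) X * e ^+ i) *+ 'C(k, i).
Proof.
rewrite /pw big_map; under eq_bigr do rewrite exprDn.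
rewrite exchange_big /=; apply: eq_bigr => i _.
by rewrite sumrMnl mulr_suml.
Qed.

Definition T k (L : seq C) := \sum_(a <- L) \sum_(b <- L) (b + a) ^+ k.

Lemma T_binom k L : T k L = \sum_(i < k.+1) (pw (k - i) L * pw i L) *+ 'C(k, i).
Proof.
rewrite /T; under eq_bigr => a _ do rewrite -(big_map (fun b => b + a) predT (fun y => y ^+ k)) -/(pw k _) pw_shift.
rewrite exchange_big /=; apply: eq_bigr => i _.
by rewrite sumrMnl -mulr_sumr.
Qed.

Lemma T_ss k L : T k L = 2%:R * pw k (ssums 2 L) + 2%:R ^+ k * pw k L.
Proof.
elim: L => [|x L IH].
  by rewrite /T /pw !big_nil /= !mulr0 addr0.
rewrite /T; under eq_bigr => a _ do rewrite big_cons. rewrite big_cons big_split /= -/(T k L) IH ssums1.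
have -> : pw k ([seq y + x | y <- L] ++ ssums 2 L) = \sum_(j <- L) (j + x) ^+ k + pw k (ssums 2 L) by rewrite /pw big_cat big_map.
have -> : pw k (x :: L) = x ^+ k + pw k L by rewrite /pw big_cons.
have -> : \sum_(i <- L) (x + i) ^+ k = \sum_(i <- L) (i + x) ^+ k.
  by apply: eq_bigr => i _; rewrite addrC.
have -> : (x + x) ^+ k = 2%:R ^+ k * x ^+ k by rewrite -exprMn mulr_natl mulr2n.
ring.
Qed.

Lemma pw0 (s : seq C) : pw 0 s = (size s)%:R.
Proof. by elim: s => [|x s IH]; rewrite /pw ?big_nil ?big_cons //= -/(pw 0 s) IH expr0 -natr1 addrC. Qed.

Lemma forward (A B : seq C) n : (forall k, n != 2 ^ k)%N -> size A = n -> size B = n ->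
  (forall k, pw k (ssums 2 A) = pw k (ssums 2 B)) -> forall k, pw k A = pw k B.
Proof.
move=> hn sA sB hs.
suff H : forall k i, (i <= k)%N -> pw i A = pw i B.
  by move=> m; apply: (H m m (leqnn m)).
elim=> [|k IH] i.
  by rewrite leqn0 => /eqP ->; rewrite !pw0 sA sB.
rewrite leq_eqVlt => /orP [/eqP ->|]; last by rewrite ltnS; exact: IH.
have hA := T_ss k.+1 A; have hB := T_ss k.+1 B.
rewrite T_binom big_ord_recl big_ord_recr /= in hA.
rewrite T_binom big_ord_recl big_ord_recr /= in hB.
have EM : \sum_(j < k) pw (k.+1 - bump 0 j) A * pw (bump 0 j) A *+ 'C(k.+1, bump 0 j) =
          \sum_(j < k) pw (k.+1 - bump 0 j) B * pw (bump 0 j) B *+ 'C(k.+1, bump 0 j).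
  apply: eq_bigr => j _; rewrite /bump leq0n add1n subSS IH ?leq_subr // IH //; exact: ltn_ord.
rewrite EM /bump leq0n add1n subn0 subnn bin0 binn !mulr1n !pw0 sA in hA.
rewrite /bump leq0n add1n subn0 subnn bin0 binn !mulr1n !pw0 sB -hs in hB.
set a := pw k.+1 A in hA *; set b := pw k.+1 B in hB *.
set M := \sum_(j < k) _ in hA hB.
have hne : (2%:R ^+ k.+1 - (n%:R + n%:R)) != 0 :> C.
  rewrite -natrX -natrD subr_eq0 eqr_nat; apply/eqP => e.
  by move: (hn k) e; rewrite expnS => /eqP; lia.
have : (2%:R ^+ k.+1 - (n%:R + n%:R)) * (a - b) = 0 :> C.
  have -> : (2%:R ^+ k.+1 - (n%:R + n%:R)) * (a - b) =
     (2 * pw k.+1 (ssums 2 A) + 2%:R ^+ k.+1 * a - (a * n%:R + (M + n%:R * a)))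
     - (2 * pw k.+1 (ssums 2 A) + 2%:R ^+ k.+1 * b - (b * n%:R + (M + n%:R * b))) :> C by ring.
  by rewrite -hA -hB !subrr.
by move/eqP; rewrite mulf_eq0 (negbTE hne) /= subr_eq0 => /eqP.
Qed.

Lemma pw_cat k (s t : seq C) : pw k (s ++ t) = pw k s + pw k t.
Proof. by rewrite /pw big_cat. Qed.

Lemma pw_map k (s : seq C) x : pw k [seq y + x | y <- s] = \sum_(y <- s) (y + x) ^+ k.
Proof. by rewrite /pw big_map. Qed.

Lemma pw_ss2_app k (L M : seq C) : pw k (ssums 2 (L ++ M)) =
  pw k (ssums 2 L) + pw k (ssums 2 M) + \sum_(a <- L) \sum_(b <- M) (b + a) ^+ k.
Proof.
elim: L => [|x L IH]; first by rewrite /= big_nil /pw big_nil add0r addr0.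
rewrite cat_cons !ss2_cons map_cat !pw_cat IH !pw_map big_cons.
ring.
Qed.

Lemma ss2_shift (L : seq C) e :
  ssums 2 [seq x + e | x <- L] = [seq y + (e + e) | y <- ssums 2 L].
Proof.
elim: L => [|x L IH]; first by [].
rewrite map_cons !ss2_cons IH map_cat -map_comp -map_comp; congr (_ ++ _); apply: eq_map => y /=; ring.
Qed.

Lemma pw_shift_eq k (X Y : seq C) e : (forall i, pw i X = pw i Y) ->
  pw k [seq x + e | x <- X] = pw k [seq x + e | x <- Y].
Proof. by move=> H; rewrite !pw_shift; apply: eq_bigr => i _; rewrite H. Qed.

Fixpoint AB (j : nat) : seq C * seq C :=
  match j with
  | 0 => ([:: 0; 2%:R], [:: 1; 1])
  | j'.+1 => ((AB j').1 ++ [seq x + 1 | x <- (AB j').2],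
              (AB j').2 ++ [seq x + 1 | x <- (AB j').1])
  end.

Lemma AB_prop j :
  [/\ size (AB j).1 = (2 ^ j.+1)%N, size (AB j).2 = (2 ^ j.+1)%N, 0 \in (AB j).1,
      all (fun x => 0 <= x) (AB j).1 & all (fun x => 0 < x) (AB j).2] /\
      forall k, pw k (ssums 2 (AB j).1) = pw k (ssums 2 (AB j).2).
Proof.
elim: j => [|j IH].
  split; first split => //=; first by rewrite mem_head.
    by rewrite lexx ler0n.
    by rewrite ltr01.
  move=> k; rewrite !ss2_cons /= /pw !big_cons !big_nil; congr (_ ^+ _ + _).
  ring.
case: IH => [[sA sB zA nA pB] hs].
set A := (AB j).1 in sA zA nA hs *; set B := (AB j).2 in sB pB hs *.
have -> : (AB j.+1) = (A ++ [seq x + 1 | x <- B], B ++ [seq x + 1 | x <- A]) by [].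
split; first split => /=.
- by rewrite size_cat size_map sA sB !expnS; lia.
- by rewrite size_cat size_map sA sB !expnS; lia.
- by rewrite mem_cat zA.
- rewrite all_cat nA /=; apply/allP => y /mapP [b bB ->].
  by apply: ltW; apply: addr_gt0; [exact: (allP pB) | exact: ltr01].
- rewrite all_cat pB /=; apply/allP => y /mapP [a aA ->].
  by apply: ltr_wpDl; [exact: (allP nA) | exact: ltr01].
- move=> k; rewrite !pw_ss2_app hs !ss2_shift (pw_shift_eq _ _ hs).
  congr (_ + _ + _).
  rewrite exchange_big /= big_map; apply: eq_bigr => b _; rewrite big_map; apply: eq_bigr => a _.
  by rewrite addrAC [b + a]addrC addrAC.
Qed.
End PW.

Theorem mainTheorem1 (C : numClosedFieldType) (n : nat) (hn : (2 < n)%N) :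
  (exists A B : seq C,
      [/\ size A = n, size B = n, ~~ perm_eq A B &
          perm_eq (ssums 2 A) (ssums 2 B)])
  <-> (exists k : nat, n = (2 ^ k)%N).
Proof.
split.
- move=> [A [B [sA sB nperm hperm]]].
  case: (boolP [exists k : 'I_n.+1, n == (2 ^ k)%N]) => [/existsP [k /eqP ->]|/existsPn H].
    by exists k.
  exfalso; apply: (negP nperm); apply: pw_perm; apply: (@forward C A B n) => //.
    move=> k; case: (ltnP k n.+1) => hk; first exact: (H (Ordinal hk)).
    apply/eqP => e; have h1 := ltn_expl n (ltnSn 1).
    have h2 := leq_pexp2l (isT : (0 < 2)%N) (ltnW hk).
    by rewrite -e in h2; lia.
  by move=> k; apply: perm_big.
- move=> [[|j] hk]; first by rewrite hk in hn.
  have [[sA sB zA nA pB] hs] := AB_prop C j.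
  exists (AB C j).1, (AB C j).2; split.
  + by rewrite sA hk.
  + by rewrite sB hk.
  + apply/negP => /perm_mem e; move: zA; rewrite e => zB.
    by have := allP pB 0%R zB; rewrite ltxx.
  + exact: pw_perm.
Qed.
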